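(* Let $\vdash$ be the logic determined by a reduced matrix $\langle\mathbf{A},F\rangle$. (1) If $\mathbf{A}$ is trivial, then $\vdash$ is weakly algebraizable if and only if $F=A$. (2) If $\mathbf{A}$ is non-trivial and all its basic operations are constants, then $\vdash$ is not weakly algebraizable. (3) If $\mathbf{A}$ is trivial, then $\vdash$ is truth-equational if and only if $F=A$. (4) If $\mathbf{A}$ is non-trivial and all its basic operations are constants, then $\vdash$ is truth-equational if and only if there is a constant symbol $\mathbf{a}$ which is interpreted in $\mathbf{A}$ as an element of $F$.
   Context: A (logical) matrix is a pair $\langle \mathbf{A}, F\rangle$ with $\mathbf{A}$ an algebra and $F\subseteq A$. The Leibniz congruence $\Omega^{\mathbf{A}}F$ is the largest congruence of $\mathbf{A}$ for which $F$ is a union of blocks; the matrix is reduced if $\Omega^{\mathbf{A}}F$ is the identity. A logic is a substitution-invariant closure relation on formulas of a fixed algebraic language; the logic determined by $\langle\mathbf{A},F\rangle$: $\Gamma\vdash\varphi$ iff every evaluation $f$ into $\mathbf{A}$ with $f[\Gamma]\subseteq F$ has $f(\varphi)\in F$. A model of $\vdash$ is a matrix $\langle\mathbf{B},G\rangle$ with $\vdash\subseteq\vdash_{\langle\mathbf{B},G\rangle}$; $\mathrm{Mod}^{*}(\vdash)$ is the class of reduced models. $\vdash$ is protoalgebraic if there is a set of formulas $\Delta(x,y,\vec z)$ such that for every model $\langle\mathbf{B},G\rangle$ and $a,b\in B$: $\langle a,b\rangle\in\Omega^{\mathbf{B}}G$ iff $\Delta(a,b,\vec c)\subseteq G$ for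 all $\vec c\in B$. $\vdash$ is truth-equational if there is a set of equations $\tau(x)$ with $G=\{b\in B:\mathbf{B}\vDash\tau(b)\}$ for every $\langle\mathbf{B},G\rangle\in\mathrm{Mod}^{*}(\vdash)$. Weakly algebraizable = protoalgebraic and truth-equational. *)

(* Defs.v *)
From mathcomp Require Import all_boot.
Set Implicit Arguments. Unset Strict Implicit. Unset Printing Implicit Defensive.

Record signature := Signature { ops : Type; arity : ops -> nat }.

Record algebra (L : signature) := Algebra {
  carrier :> Type;
  op : forall o : ops L, ('I_(arity o) -> carrier) -> carrier }.

Inductive formula (L : signature) : Type :=
| Var : nat -> formula L
| App : forall o : ops L, ('I_(arity o) -> formula L) -> formula L.

Fixpoint eval (L : signature) (A : algebra L) (h : nat -> A) (t : formula L) : A :=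
  match t with
  | Var n => h n
  | App o ts => @op L A o (fun i => eval h (ts i))
  end.

Definition logic (L : signature) := (formula L -> Prop) -> formula L -> Prop.

Definition matrix_logic (L : signature) (A : algebra L) (F : A -> Prop) : logic L :=
  fun Gamma phi => forall h : nat -> A,
    (forall g, Gamma g -> F (eval h g)) -> F (eval h phi).

Definition congruence (L : signature) (A : algebra L) (th : A -> A -> Prop) : Prop :=
  (forall a, th a a) /\ (forall a b, th a b -> th b a) /\
  (forall a b c, th a b -> th b c -> th a c) /\
  (forall (o : ops L) (xs ys : 'I_(arity o) -> A),
      (forall i, th (xs i) (ys i)) -> th (@op L A o xs) (@op L A o ys)).

Definition compatible (L : signature) (A : algebra L) (th : A -> A -> Prop) (F : A -> Prop) :=
  forall a b, th a b -> F a -> F b.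

(* Leibniz congruence: the largest congruence compatible with F, presented as
   the union of all congruences compatible with F (which is that largest one). *)
Definition Leibniz (L : signature) (A : algebra L) (F : A -> Prop) (a b : A) : Prop :=
  exists th, congruence th /\ compatible th F /\ th a b.

Definition reduced (L : signature) (A : algebra L) (F : A -> Prop) : Prop :=
  forall a b, Leibniz F a b -> a = b.

Definition model (L : signature) (lg : logic L) (B : algebra L) (G : B -> Prop) : Prop :=
  forall Gamma phi, lg Gamma phi -> matrix_logic G Gamma phi.

(* Protoalgebraic: a set Delta(x, y, z...) of formulas, x = var 0, y = var 1,
   the remaining variables being the parameters z. *)
Definition protoalgebraic (L : signature) (lg : logic L) : Prop :=
  exists Delta : formula L -> Prop,
    forall (B : algebra L) (G : B -> Prop), model lg G ->
      forall a b : B,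
        Leibniz G a b <->
        (forall h : nat -> B, h 0 = a -> h 1 = b ->
           forall d, Delta d -> G (eval h d)).

(* Truth-equational: a set tau(x) of equations (pairs of formulas) in the
   variable x; B |= tau(b) is evaluated by sending every variable to b. *)
Definition truth_equational (L : signature) (lg : logic L) : Prop :=
  exists tau : formula L * formula L -> Prop,
    forall (B : algebra L) (G : B -> Prop), model lg G -> reduced G ->
      forall b : B,
        G b <-> (forall e, tau e -> eval (fun _ => b) e.1 = eval (fun _ => b) e.2).

Definition weakly_algebraizable (L : signature) (lg : logic L) : Prop :=
  protoalgebraic lg /\ truth_equational lg.

Definition trivial_alg (L : signature) (A : algebra L) : Prop := forall a b : A, a = b.

Definition all_constants (L : signature) : Prop := forall o : ops L, arity o = 0.

Lemma ord_arity0_absurd n (H : n = 0) (i : 'I_n) : False.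
Proof. by case: i => m; rewrite H. Qed.

Definition const_val (L : signature) (A : algebra L) (o : ops L) (H : arity o = 0) : A :=
  @op L A o (fun i => False_rect A (ord_arity0_absurd H i)).

(* Main.v *)
Require Import Defs.
From mathcomp Require Import all_boot.
From Stdlib Require Import Classical FunctionalExtensionality.

Lemma empty_fun n (H : n = 0) T (f g : 'I_n -> T) : f = g.
Proof.
apply: functional_extensionality => i; case: (ord_arity0_absurd H i).
Qed.

Arguments empty_fun {n} H {T} f g.

Lemma leib_refl (L : signature) (B : algebra L) (G : B -> Prop) x : Leibniz G x x.
Proof.
exists (fun u v => u = v); split; last by split => // u v ->.
split; first by [].
split; first by move=> ? ? ->.
split; first by move=> ? ? ? -> ->.
move=> o xs ys H; have -> : xs = ys by apply: functional_extensionality.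
by [].
Qed.

Lemma leib_iff (L : signature) (B : algebra L) (G : B -> Prop) u v :
  all_constants L -> (G u <-> G v) -> Leibniz G u v.
Proof.
move=> AC Huv; exists (fun x y => G x <-> G y); split; last first.
  by split => // x y [].
split; first by [].
split; first by move=> x y [H1 H2]; split.
split; first by move=> x y z [H1 H2] [H3 H4]; split; auto.
move=> o xs ys _; by rewrite (empty_fun (AC o) xs ys).
Qed.

Lemma eval_const (L : signature) (B : algebra L) (AC : all_constants L)
  (h h' : nat -> B) o ts : eval h (@App L o ts) = eval h' (@App L o ts).
Proof. by rewrite /=; congr (@op _ _ o _); apply: (empty_fun (AC o)). Qed.

Definition unitAlg (L : signature) : algebra L := @Algebra L unit (fun _ _ => tt).

Lemma all_F_we (L : signature) (A : algebra L) (F : A -> Prop) :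
  (forall a : A, F a) -> weakly_algebraizable (matrix_logic F).
Proof.
move=> HF.
have allG : forall (B : algebra L) (G : B -> Prop), model (matrix_logic F) G ->
   forall b, G b.
  move=> B G M b.
  have := M (fun _ => False) (Var L 0) (fun h _ => HF _) (fun _ => b).
  by apply => g [].
split.
  exists (fun _ => False) => B G M a b; split; first by move=> _ h _ _ d [].
  move=> _; exists (fun _ _ => True); split; last by split => // x y _ _; apply: allG.
  by do 3 (split => //).
exists (fun _ => False) => B G M _ b; split; first by move=> _ e [].
by move=> _; apply: allG.
Qed.

Theorem lemma2p3 (L : signature) (A : algebra L) (F : A -> Prop) :
  reduced F ->
  (trivial_alg A ->
     (weakly_algebraizable (matrix_logic F) <-> (forall a : A, F a))) /\
  ((exists a b : A, a <> b) -> all_constants L ->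
     ~ weakly_algebraizable (matrix_logic F)) /\
  (trivial_alg A ->
     (truth_equational (matrix_logic F) <-> (forall a : A, F a))) /\
  ((exists a b : A, a <> b) -> all_constants L ->
     (truth_equational (matrix_logic F) <->
      exists (o : ops L) (H : arity o = 0), F (@const_val L A o H))).
Proof.
move=> Red.
have selfM : model (matrix_logic F) F by [].
have te_triv : trivial_alg A -> truth_equational (matrix_logic F) -> forall a, F a.
  move=> Tr [tau Htau] a; apply/(Htau A F selfM Red a) => e _; exact: Tr.
split.
  move=> Tr; split; first by move=> [_ H]; exact: te_triv.
  exact: (@all_F_we _ _ _).
split.
  move=> [a [b Hab]] AC [[Delta HD] _].
  have HL := HD A F selfM a b.
  have NL : ~ Leibniz F a b by move=> /Red.
  have : ~ (forall h : nat -> A, h 0 = a -> h 1 = b ->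
             forall d, Delta d -> F (eval h d)) by move=> H; apply: NL; apply/HL.
  move=> Hn; apply: Hn => h h0 h1 d Dd.
  apply: NNPP => NF.
  set x := eval h d.
  have := (proj1 (HD A F selfM x x)) (@leib_refl _ _ F x) (fun _ => x) erefl erefl d Dd.
  have -> : eval (fun _ => x) d = x.
    rewrite /x; clear NF x; by case: d Dd => [n|o ts] _ //; exact: (@eval_const _ _ AC).
  by [].
split.
  move=> Tr; split; first exact: te_triv.
  by move=> HF; case: (@all_F_we _ _ _ HF).
move=> [a [b Hab]] AC; split.
  move=> [tau Htau]; apply: NNPP => Nc.
  have M : model (matrix_logic F) (fun _ : unitAlg L => False).
    move=> Gamma phi HG h Hg.
    have Hall : forall h', F (eval h' phi) by move=> h'; apply: HG => g /Hg.
    case: phi HG Hall => [n|o ts] HG Hall.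
      apply: Hab; apply: Red; apply: leib_iff => //.
      by split => _; [apply: (Hall (fun _ => b)) | apply: (Hall (fun _ => a))].
    apply: Nc; exists o, (AC o); have := Hall (fun _ => a).
    by rewrite /= /const_val; congr (F (@op _ _ o _)); apply: (empty_fun (AC o)).
  have Red' : reduced (fun _ : unitAlg L => False) by move=> [] [].
  have := Htau (unitAlg L) _ M Red' tt.
  by move=> [_ H]; apply: H => e _; case: (eval _ e.1); case: (eval _ e.2).
move=> [o [H Fc]].
pose c := @App L o (fun i => False_rect (formula L) (ord_arity0_absurd H i)).
have evc : forall (B : algebra L) (h : nat -> B), eval h c = const_val B H.
  by move=> B h; rewrite /= /const_val; congr (@op _ _ o _); apply: (empty_fun H).
exists (fun e => e = (Var L 0, c)) => B G M RB x.
have Gc : G (const_val B H).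
  rewrite -(evc B (fun _ => x)); apply: (M (fun _ => False)) => //.
  by move=> h _; rewrite evc.
split.
  move=> Gx e ->; change (x = eval (fun _ => x) c); rewrite evc.
  apply: RB; apply: leib_iff => //.
move=> He; have := He _ erefl; change (x = eval (fun _ => x) c -> G x).
rewrite evc => ->; exact: Gc.
Qed.
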